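(* Let $n,m\ge1$ and $\vec w\in\hat N^{n+m}$. Then there exist unique $\vec u\in\hat N^n$ and $\vec v\in\hat N^m$ such that $\vec u\nearrow\vec v\le\vec w\le\vec u\nwarrow\vec v$ (componentwise). Consequently the intervals $[\vec u\nearrow\vec v,\vec u\nwarrow\vec v]$, $(\vec u,\vec v)\in\hat N^n\times\hat N^m$, form a partition of $\hat N^{n+m}$.
   Context: $\hat N^n$ ($n\ge1$) is the set of names of planar rooted binary trees with $n$ internal vertices: writing a tree as a complete expression (full binary parenthesization, outermost product included) of $x_1\cdots x_{n+1}$, its name $\vec v\in\mathbb N^n$ has $v_i=i$ if at least one left parenthesis stands immediately left of $x_i$, and otherwise $v_i=j$ where the rightmost of the right parentheses immediately following $x_i$ matches a left parenthesis in the run immediately preceding $x_j$. For $\vec u\in\hat N^n,\vec v\in\hat N^m$: $\vec u\nearrow\vec v=(\vec u,n\triangleright v_1,\dots,n\triangleright v_m)$ with $n\triangleright a=a+n$ for $a\neq1$, $n\triangleright1=1$, and $\vec u\nwarrow\vec v=(u_1,\dots,u_n,v_1+n,\dots,v_m+n)$. Componentwise order: $\vec a\le\vec b$ iff $a_i\le b_i$ for all $i$; intervals are taken inside $\hat N^{n+m}$. *)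

(* Defs.v *)
From mathcomp Require Import all_boot.
Set Implicit Arguments. Unset Strict Implicit. Unset Printing Implicit Defensive.

Inductive btree := BLeaf | BNode of btree & btree.

Fixpoint internal (t : btree) : nat :=
  match t with BLeaf => 0 | BNode l r => (internal l + internal r).+1 end.

(* Tokens of a complete expression: LP = "(", RP = ")", X = a variable. *)
Definition tok := option bool.
Definition LP : tok := Some true.
Definition RP : tok := Some false.
Definition X  : tok := None.

(* The complete expression (full binary parenthesization, outermost product
   included) of the tree; the variables are read x_1, x_2, ... left to right. *)
Fixpoint expr (t : btree) : seq tok :=
  match t with
  | BLeaf => [:: X]
  | BNode l r => LP :: expr l ++ expr r ++ [:: RP]
  end.

Definition xpos (w : seq tok) : seq nat :=
  [seq p <- iota 0 (size w) | nth LP w p == X].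
(* position of x_i (i >= 1) *)
Definition leafpos (w : seq tok) (i : nat) : nat := nth 0 (xpos w) i.-1.
(* index j of the first variable x_j at or after position r *)
Definition leafidx (w : seq tok) (r : nat) : nat := (count (pred1 X) (take r w)).+1.
Definition hasLP (w : seq tok) (p : nat) : bool := (0 < p) && (nth X w p.-1 == LP).
Definition runRP (w : seq tok) (p : nat) : nat := find (fun c => c != RP) (drop p.+1 w).
Definition seg (w : seq tok) (r q : nat) : seq tok := take (q - r).+1 (drop r w).
(* position of the left parenthesis matching the right parenthesis at q *)
Definition matchLP (w : seq tok) (q : nat) : nat :=
  last 0 [seq r <- iota 0 q | (nth X w r == LP) &&
            (count (pred1 LP) (seg w r q) == count (pred1 RP) (seg w r q))].

Definition nameAt (w : seq tok) (i : nat) : nat :=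
  let p := leafpos w i in
  if hasLP w p then i else leafidx w (matchLP w (p + runRP w p)).

Definition name (t : btree) : seq nat :=
  [seq nameAt (expr t) i | i <- iota 1 (internal t)].

Definition Nhat (n : nat) (v : seq nat) : Prop :=
  exists t : btree, internal t = n /\ name t = v.

Definition tri (n a : nat) : nat := if a == 1 then 1 else a + n.

Definition nearrow (u v : seq nat) : seq nat := u ++ [seq tri (size u) a | a <- v].
Definition nwarrow (u v : seq nat) : seq nat := u ++ [seq a + size u | a <- v].

Definition vle (a b : seq nat) : bool := all2 leq a b.

(* Main.v *)
Require Import Defs.
From mathcomp Require Import all_boot zify.
Set Implicit Arguments.

Lemma count_expr t : count (pred1 X) (expr t) = (internal t).+1.
Proof.
elim: t => [|l IHl r IHr] //=. rewrite !count_cat IHl IHr /=. lia.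
Qed.

Lemma bal_expr t : count (pred1 LP) (expr t) = count (pred1 RP) (expr t).
Proof.
elim: t => [|l IHl r IHr] //=. rewrite !count_cat IHl IHr /=. lia.
Qed.

Lemma xpos_cat x y : xpos (x ++ y) = xpos x ++ map (addn (size x)) (xpos y).
Proof.
rewrite /xpos size_cat iotaD filter_cat add0n.
have -> : iota (size x) (size y) = map (addn (size x)) (iota 0 (size y)) by rewrite -iotaDl addn0.
rewrite filter_map; congr (_ ++ _).
  apply: eq_in_filter => q; rewrite mem_iota add0n => /andP[_ Hq].
  by rewrite nth_cat Hq.
congr map; apply: eq_filter => q /=.
by rewrite nth_cat ltnNge leq_addr /= addKn.
Qed.

Lemma size_xpos x : size (xpos x) = count (pred1 X) x.
Proof.
elim: x => [|a x IH] //.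
rewrite -cat1s xpos_cat size_cat size_map IH /=.
by case: a => [[]|].
Qed.

Lemma xpos_X y : xpos (X :: y) = 0 :: map (addn 1) (xpos y).
Proof. by rewrite -cat1s xpos_cat. Qed.

Fixpoint pre t := match t with BLeaf => [::] | BNode l r => LP :: expr l ++ pre r end.
Fixpoint kk t := match t with BLeaf => 0 | BNode l r => (kk r).+1 end.

Lemma expr_split t : expr t = pre t ++ X :: nseq (kk t) RP.
Proof.
elim: t => [|l _ r IHr] //=. rewrite IHr -!catA /=.
congr (_ :: _ ++ _ ++ _ :: _).
by elim: (kk r) => //= k ->.
Qed.

Lemma count_pre t : count (pred1 X) (pre t) = internal t.
Proof.
elim: t => [|l _ r IHr] //=. rewrite count_cat count_expr IHr /=. lia.
Qed.

Lemma last_expr t : last LP (expr t) != LP.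
Proof. case: t => [|l r] //=. by rewrite !last_cat. Qed.

Lemma last_pre t : 0 < internal t -> last LP (pre t) != LP.
Proof.
elim: t => [|l _ r IHr] //= _.
rewrite last_cat.
case: r IHr => [|r1 r2] IHr /=; first exact: last_expr.
exact: IHr.
Qed.

Lemma take_height t j :
  count (pred1 RP) (take j (expr t)) <= count (pred1 LP) (take j (expr t)).
Proof.
elim: t j => [|l IHl r IHr] j; first by case: j => [|[]].
case: j => [|j] //=.
rewrite take_cat; case: ifP => H1.
  by rewrite add0n add1n; apply: leqW.
rewrite take_cat; case: ifP => H2.
  rewrite !count_cat bal_expr add0n add1n -addnS leq_add2l; apply: leqW; exact: IHr.
rewrite !count_cat bal_expr [in X in _ <= X]bal_expr add0n add1n -!addnS !leq_add2l.
by case: (j - size (expr l) - size (expr r)) => [|[|k]].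
Qed.

Lemma take_height_strict l r j : 0 < j < size (expr (BNode l r)) ->
  count (pred1 RP) (take j (expr (BNode l r))) < count (pred1 LP) (take j (expr (BNode l r))).
Proof.
move=> /andP[Hj0 Hj]; case: j Hj0 Hj => [|j] // _ Hj.
rewrite /= !size_cat /= in Hj.
rewrite /= take_cat; case: ifP => H1.
  by rewrite add0n add1n ltnS; apply: take_height.
rewrite take_cat; case: ifP => H2.
  rewrite !count_cat bal_expr add0n add1n ltnS leq_add2l; exact: take_height.
move: H1 H2 Hj. rewrite ltnNge => /negbFE H1. rewrite ltnNge => /negbFE H2 Hj.
have -> : j - size (expr l) - size (expr r) = 0 by lia.
by rewrite /= !count_cat bal_expr [in X in _ < X]bal_expr /= !addn0 add1n.
Qed.

Lemma nth_mid (T : Type) (d : T) (p A y : seq T) q : q < size A -> nth d (p ++ A ++ y) (size p + q) = nth d A q.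
Proof. move=> Hq; by rewrite nth_cat ltnNge leq_addr /= addKn nth_cat Hq. Qed.

Lemma seg_mid (p A y : seq tok) r q : r <= q < size A ->
  seg (p ++ A ++ y) (size p + r) (size p + q) = seg A r q.
Proof.
move=> /andP[Hrq HqA]; rewrite /seg subnDl drop_cat ltnNge leq_addr /= addKn.
rewrite drop_cat (leq_ltn_trans Hrq HqA) take_cat size_drop.
case: ltnP => H //.
have -> : (q - r).+1 - (size A - r) = 0 by lia.
by rewrite take0 cats0 take_oversize // size_drop.
Qed.

Lemma leafpos_at a b : nth 0 (xpos (a ++ X :: b)) (count (pred1 X) a) = size a.
Proof. by rewrite xpos_cat xpos_X nth_cat size_xpos ltnn subnn /= addn0. Qed.

Lemma L_leaf p s r :
  nameAt (p ++ LP :: expr BLeaf ++ expr r ++ RP :: s) (count (pred1 X) p).+1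
  = (count (pred1 X) p).+1.
Proof.
have Hw : p ++ LP :: expr BLeaf ++ expr r ++ RP :: s = (p ++ [:: LP]) ++ X :: (expr r ++ RP :: s)
  by rewrite -catA.
rewrite /nameAt /leafpos Hw /=.
have -> : count (pred1 X) p = count (pred1 X) (p ++ [:: LP]) by rewrite count_cat addn0.
rewrite leafpos_at /hasLP size_cat addn1 /=.
by rewrite -catA nth_cat ltnn subnn.
Qed.

Lemma drop_after (a z : seq tok) : drop (size a).+1 (a ++ X :: z) = z.
Proof. by rewrite -cat_rcons drop_size_cat // size_rcons. Qed.

Lemma L_node p s l1 l2 r :
  nameAt (p ++ LP :: expr (BNode l1 l2) ++ expr r ++ RP :: s)
    (count (pred1 X) p + internal (BNode l1 l2)).+1 = (count (pred1 X) p).+1.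
Proof.
set l := BNode l1 l2. set A := expr l. set w := p ++ _.
have Hsplit : A = pre l ++ X :: nseq (kk l) RP by exact: expr_split.
set x := pre l in Hsplit. set k := kk l in Hsplit.
set y := expr r ++ RP :: s.
set z := nseq k RP ++ y.
have Hw : w = (p ++ LP :: x) ++ X :: z by rewrite /w Hsplit -!catA /= -catA.
have Hpx : count (pred1 X) x = internal l := count_pre l.
have Hcx : count (pred1 X) (p ++ LP :: x) = count (pred1 X) p + internal l.
  by rewrite count_cat -cat1s count_cat Hpx.
have Hx0 : 0 < size x.
  by move: Hpx; rewrite /l /=; case: (x).
have Hlp : leafpos w (count (pred1 X) p + internal l).+1 = size (p ++ LP :: x).
  by rewrite /leafpos Hw /= -Hcx leafpos_at.
have Hhas : hasLP w (size (p ++ LP :: x)) = false.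
  rewrite /hasLP size_cat /= addnS /= Hw -catA nth_mid ?ltnSn //.
  have := nth_last X (LP :: x). rewrite /= => ->.
  by apply/negbTE; exact: (last_pre l).
have Hrun : runRP w (size (p ++ LP :: x)) = k.
  rewrite /runRP Hw drop_after /z find_cat has_nseq eqxx andbF size_nseq.
  suff -> : find (fun c => c != RP) y = 0 by rewrite addn0.
  by rewrite /y; case: (r).
rewrite /nameAt Hlp Hhas Hrun.
set p' := p ++ [:: LP].
have Hw' : w = p' ++ A ++ y by rewrite /w /p' -catA.
have HsA : size A = (size x + k).+1 by rewrite Hsplit size_cat /= size_nseq addnS.
have HQ : size (p ++ LP :: x) + k = size p' + (size x + k) by rewrite /p' !size_cat /= addnA addnS addn1.
rewrite HQ.
have Hm : matchLP w (size p' + (size x + k)) = size p'.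
  rewrite /matchLP iotaD add0n filter_cat last_cat.
  case Hn : (size x + k) => [|n']; first by move: Hx0 Hn; lia.
  have E1 : nth X w (size p') = LP by rewrite Hw' -[size p']addn0 nth_mid // HsA.
  have E2 : seg w (size p') (size p' + n'.+1) = A.
    rewrite Hw' -{1}[size p']addn0 seg_mid ?HsA ?Hn ?ltnSn //.
    by rewrite /seg drop0 subn0 -Hn -HsA take_size.
  rewrite /= E1 E2 bal_expr !eqxx /=.
  have -> : [seq r0 <- iota (size p').+1 n' | (nth X w r0 == LP) &&
       (count_mem LP (seg w r0 (size p' + n'.+1)) == count_mem RP (seg w r0 (size p' + n'.+1)))] = [::].
    apply/eqP; rewrite -[_ == _]negbK -has_filter; apply/hasPn => q.
    rewrite mem_iota => /andP[Hq1 Hq2].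
    have -> : q = size p' + (q - size p') by lia.
    rewrite Hw' seg_mid; last by rewrite HsA; lia.
    set r' := q - size p'.
    have Hseg : seg A r' n'.+1 = drop r' A.
      rewrite /seg take_oversize // size_drop HsA Hn. lia.
    rewrite Hseg negb_and; apply/orP; right.
    have Hst := take_height_strict l1 l2 r'.
    have Hb := bal_expr l.
    have H1 := count_cat (pred1 LP) (take r' A) (drop r' A).
    have H2 := count_cat (pred1 RP) (take r' A) (drop r' A).
    rewrite cat_take_drop in H1 H2.
    rewrite -/l -/A in Hst Hb.
    have : 0 < r' < size A by rewrite HsA; lia.
    move=> /Hst; move: Hb H1 H2.
    move: (count_mem LP A) (count_mem RP A) (count_mem LP (take r' A)) (count_mem RP (take r' A)) (count_mem LP (drop r' A)) (count_mem RP (drop r' A)).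
    move=> a1 a2 a3 a4 a5 a6; lia.
  by [].
rewrite Hm /leafidx Hw' take_size_cat // /p' count_cat addn0.
by [].
Qed.

Lemma L p s l r :
  nameAt (p ++ LP :: expr l ++ expr r ++ RP :: s) (count (pred1 X) p + internal l).+1
  = (count (pred1 X) p).+1.
Proof. case: l => [|l1 l2]; [rewrite addn0; exact: L_leaf | exact: L_node]. Qed.

Lemma cntLP (p : seq tok) : count (pred1 X) (p ++ [:: LP]) = count (pred1 X) p.
Proof. by rewrite count_cat addn0. Qed.

Lemma G t : forall p s i, 0 < i <= internal t ->
  nameAt (p ++ expr t ++ s) (count (pred1 X) p + i) = count (pred1 X) p + nameAt (expr t) i.
Proof.
elim: t => [|l IHl r IHr] p s i /andP[Hi0 Hi]; first by rewrite /= in Hi; lia.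
rewrite /= in Hi.
case: (ltngtP i (internal l).+1) => Hil.
- have E1 : p ++ expr (BNode l r) ++ s = (p ++ [:: LP]) ++ expr l ++ (expr r ++ RP :: s).
    by rewrite /= -?catA /= -?catA.
  have E2 : expr (BNode l r) = [:: LP] ++ expr l ++ (expr r ++ [:: RP]) by [].
  rewrite ltnS in Hil.
  rewrite E1 -cntLP IHl ?Hi0 ?Hil //.
  by rewrite E2 -[i]add0n IHl ?Hi0 ?Hil.
- have E1 : p ++ expr (BNode l r) ++ s = (p ++ LP :: expr l) ++ expr r ++ (RP :: s).
    by rewrite /= -?catA /= -?catA.
  have E2 : expr (BNode l r) = (LP :: expr l) ++ expr r ++ [:: RP] by [].
  have Hj : i = count (pred1 X) (LP :: expr l) + (i - (internal l).+1).
    by rewrite /= count_expr; lia.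
  rewrite E1 E2 Hj addnA -count_cat IHr; last by apply/andP; split; lia.
  rewrite IHr; last by apply/andP; split; lia.
  by rewrite count_cat addnA.
- have E1 : p ++ expr (BNode l r) ++ s = p ++ LP :: expr l ++ expr r ++ RP :: s.
    by rewrite /= -?catA /= -?catA.
  have E2 : expr (BNode l r) = [::] ++ LP :: expr l ++ expr r ++ RP :: [::].
    by rewrite /= -?catA.
  rewrite E1 Hil addnS L E2 -[(internal l).+1]/((count (pred1 X) [::] + internal l).+1) L.
  by rewrite addn1.
Qed.

Lemma name_node l r :
  name (BNode l r) = name l ++ 1 :: map (addn (internal l).+1) (name r).
Proof.
rewrite /name [internal _]/= -addnS iotaD map_cat; congr (_ ++ _).
  apply/eq_in_map => i; rewrite mem_iota => /andP[Hi0 Hi].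
  have E2 : expr (BNode l r) = [:: LP] ++ expr l ++ (expr r ++ [:: RP]) by [].
  rewrite E2 -[i]/(count (pred1 X) [:: LP] + i) G //.
  by rewrite Hi0 -ltnS -(addn1 (internal l)) addnC.
rewrite add1n /=; congr (_ :: _).
  change (nameAt ([::] ++ LP :: expr l ++ expr r ++ RP :: [::]) (count (pred1 X) [::] + internal l).+1 = 1).
  by rewrite L.
rewrite -(addn1 (internal l).+1) iotaDl -!map_comp.
apply/eq_in_map => j; rewrite mem_iota => /andP[Hj0 Hj] /=.
change (nameAt ((LP :: expr l) ++ expr r ++ [:: RP]) ((internal l).+1 + j) = (internal l).+1 + nameAt (expr r) j).
have Hc : count (pred1 X) (LP :: expr l) = (internal l).+1 by rewrite /= count_expr.
rewrite -Hc G // Hj0 /=. by rewrite addnC addn1 ltnS in Hj.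
Qed.

Lemma name_leaf : name BLeaf = [::]. Proof. by []. Qed.
Lemma size_name t : size (name t) = internal t.
Proof. by rewrite /name size_map size_iota. Qed.

Lemma name_pos t : all (fun a => 0 < a) (name t).
Proof.
elim: t => [|l IHl r IHr] //; rewrite name_node all_cat IHl /= all_map.
by apply/allP => x _ /=; rewrite addSn.
Qed.

Lemma all2_cat (a b c d : seq nat) : size a = size c ->
  all2 leq (a ++ b) (c ++ d) = all2 leq a c && all2 leq b d.
Proof. by elim: a c => [|x a IH] [|y c] //= [] /IH ->; rewrite andbA. Qed.

Lemma all2_refl (a : seq nat) : all2 leq a a.
Proof. by elim: a => //= x a ->; rewrite leqnn. Qed.

Lemma all2_anti (a c : seq nat) : all2 leq a c -> all2 leq c a -> a = c.
Proof.
elim: a c => [|x a IH] [|y c] //= /andP[H1 H2] /andP[H3 H4].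
by rewrite (IH _ H2 H4); congr (_ :: _); apply/eqP; rewrite eqn_leq H1 H3.
Qed.

Lemma all2_map (f g : nat -> nat) (s : seq nat) :
  all2 leq (map f s) (map g s) = all (fun x => f x <= g x) s.
Proof. by elim: s => //= x s ->. Qed.

Lemma all2_mapl (f : nat -> nat) (s d : seq nat) : size s = size d ->
  all2 leq (map f s) d = all2 (fun x y => f x <= y) s d.
Proof. by elim: s d => [|x s IH] [|y d] //= [] /IH ->. Qed.

Lemma all2_mapr (f : nat -> nat) (s d : seq nat) : size s = size d ->
  all2 leq d (map f s) = all2 (fun x y => y <= f x) s d.
Proof. by elim: s d => [|x s IH] [|y d] //= [] /IH ->. Qed.

Definition fdn (n a : nat) := if a <= n.+1 then 1 else a - n.

Lemma take_name t k : k <= internal t -> Nhat k (take k (name t)).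
Proof.
elim: t k => [|l IHl r IHr] k Hk.
  by move: Hk; rewrite leqn0 => /eqP ->; exists BLeaf.
rewrite name_node take_cat size_name.
case: ltnP => H1; first exact: IHl (ltnW H1).
case: (posnP (k - internal l)) => H2.
  have -> : k = internal l by lia.
  by rewrite subnn take0 cats0; exists l.
have [j Hj] : exists j, k - internal l = j.+1 by exists (k - internal l).-1; lia.
rewrite Hj /= -map_take.
have [t' [It' Nt']] := IHr j ltac:(rewrite /= in Hk; lia).
exists (BNode l t'); split; first by rewrite /=; lia.
by rewrite name_node Nt'.
Qed.

Lemma drop_name t k : k <= internal t ->
  Nhat (internal t - k) (map (fdn k) (drop k (name t))).
Proof.
elim: t k => [|l IHl r IHr] k Hk.
  by move: Hk; rewrite leqn0 => /eqP ->; exists BLeaf.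
rewrite name_node drop_cat size_name.
case: ltnP => H1.
  have [t'' [It'' Nt'']] := IHl k (ltnW H1).
  exists (BNode t'' r); split; first by rewrite /=; lia.
  rewrite name_node map_cat Nt'' It''; congr (_ ++ _).
  rewrite /= {1}/fdn /= -map_comp; congr (_ :: _).
  apply/eq_in_map => x Hx /=.
  have := allP (name_pos r) x Hx. rewrite /fdn => Hx0.
  case: ifP => H; first lia. lia.
case: (posnP (k - internal l)) => H2.
  have Ek : k = internal l by lia.
  rewrite H2 drop0 /=; exists (BNode BLeaf r); split; first by rewrite /=; lia.
  rewrite name_node /= {1}/fdn /= -map_comp; congr (_ :: _).
  apply/eq_in_map => x Hx /=.
  have := allP (name_pos r) x Hx. rewrite /fdn Ek => Hx0.
  case: ifP => H; first lia. lia.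
have [j Hj] : exists j, k - internal l = j.+1 by exists (k - internal l).-1; lia.
rewrite Hj /= -map_drop -map_comp.
have [t' [It' Nt']] := IHr j ltac:(rewrite /= in Hk; lia).
exists t'; split; first by rewrite /= in Hk *; lia.
rewrite Nt'; apply/eq_map => x /=.
rewrite /fdn; case: ifP => H; case: ifP => H'; lia.
Qed.

Fixpoint graft t1 t2 := match t1 with BLeaf => t2 | BNode l r => BNode l (graft r t2) end.

Lemma internal_graft t1 t2 : internal (graft t1 t2) = internal t1 + internal t2.
Proof. by elim: t1 => //= l _ r ->; rewrite addSn addnA. Qed.

Lemma name_graft t1 t2 : name (graft t1 t2) = nwarrow (name t1) (name t2).
Proof.
rewrite /nwarrow; elim: t1 => [|l _ r IHr]; rewrite [graft _ _]/=.
  by rewrite map_id_in // => x _; rewrite addn0.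
rewrite !name_node IHr map_cat -catA /= -map_comp size_cat /= size_map !size_name.
congr (_ ++ _ :: _ ++ _); apply/eq_map => x /=; lia.
Qed.

Lemma Nhat_size k u : Nhat k u -> size u = k.
Proof. by case=> t [<- <-]; rewrite size_name. Qed.
Lemma Nhat_pos k u : Nhat k u -> all (fun a => 0 < a) u.
Proof. by case=> t [_ <-]; apply: name_pos. Qed.

Lemma uniq_v n (v d : seq nat) : size v = size d -> all (fun a => 0 < a) v ->
  all2 leq (map (tri n) v) d -> all2 leq d (map (addn^~ n) v) -> v = map (fdn n) d.
Proof.
elim: v d => [|x v IH] [|y d] //= [] Hs /andP[Hx Hv] /andP[H1 H2] /andP[H3 H4].
rewrite (IH d Hs Hv H2 H4); congr (_ :: _).
move: H1 H3; rewrite /tri /fdn; case: eqP => Ex; case: ifP => H; lia.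
Qed.

Theorem mainTheorem13 (n m : nat) :
  1 <= n -> 1 <= m ->
  (* existence and uniqueness of (u, v) with u ↗ v <= w <= u ↖ v *)
  (forall w : seq nat, Nhat (n + m) w ->
     exists! uv : seq nat * seq nat,
       [/\ Nhat n uv.1, Nhat m uv.2,
           vle (nearrow uv.1 uv.2) w & vle w (nwarrow uv.1 uv.2)]) /\
  (* consequently the intervals partition \hat N^(n+m): they are nonempty
     (disjointness and covering are the first conjunct) *)
  (forall u v : seq nat, Nhat n u -> Nhat m v ->
     exists w : seq nat,
       [/\ Nhat (n + m) w, vle (nearrow u v) w & vle w (nwarrow u v)]).
Proof.
move=> Hn Hm; split.
  move=> w Hw; have [t [It Nt]] := Hw.
  have Hsw : size w = n + m by rewrite -Nt size_name.
  have Hpw := Nhat_pos Hw.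
  have Hst : size (take n w) = n by rewrite size_take Hsw; case: ltnP => //; lia.
  exists (take n w, map (fdn n) (drop n w)); split.
    split => /=.
    - rewrite -Nt; apply: take_name; lia.
    - have -> : m = internal t - n by lia.
      rewrite -Nt; apply: drop_name; lia.
    - rewrite /vle /nearrow Hst -{3}(cat_take_drop n w) all2_cat // all2_refl /=.
      rewrite -map_comp all2_mapl ?size_map // .
      have : all (fun a => 0 < a) (drop n w) by move: Hpw; rewrite -{1}(cat_take_drop n w) all_cat => /andP[].
      elim: (drop n w) => //= a d IH /andP[Ha Hd]; rewrite IH // andbT.
      rewrite /fdn; case: ifP => H; first by rewrite /tri eqxx.
      rewrite /tri; case: (a - n =P 1) => E; lia.
    - rewrite /vle /nwarrow -{1}(cat_take_drop n w) all2_cat ?Hst // all2_refl /=.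
      rewrite -map_comp all2_mapr ?size_map //.
      elim: (drop n w) => //= a d ->; rewrite andbT.
      rewrite /fdn; case: ifP => H; lia.
  case=> u v [/= Hu Hv H1 H2].
  have Hsu := Nhat_size Hu; have Hsv := Nhat_size Hv.
  move: H1 H2; rewrite /vle /nearrow /nwarrow -{1 2}(cat_take_drop n w).
  rewrite !all2_cat ?Hst ?Hsu // => /andP[H1 H1'] /andP[H2 H2'].
  have Eu : u = take n w by apply: all2_anti.
  rewrite Eu (@uniq_v n v (drop n w)) //; first by rewrite size_drop Hsw Hsv; lia.
  exact: Nhat_pos Hv.
move=> u v [t1 [I1 N1]] [t2 [I2 N2]].
exists (nwarrow u v); split.
- exists (graft t1 t2); by rewrite internal_graft name_graft I1 I2 N1 N2.
- rewrite /vle /nearrow /nwarrow all2_cat // all2_refl /= all2_map.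
  by apply/allP => x _; rewrite /tri; case: ifP => [/eqP ->|_].
- exact: all2_refl.
Qed.
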